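(* There is an absolute constant $C>0$ such that for every group $G$ (with a measurable structure), every probability measure $\mu$ on $G$, setting $\mu'=\frac12\mu+\frac12\delta_1$, and every $N>1$, $$\Big\|\frac1{2N}\sum_{k=1}^{2N}\mu'^{*k}-\frac1N\sum_{k=1}^N\mu^{*k}\Big\|\le C\frac{\log N}{\sqrt N},$$ where $\|\cdot\|$ denotes the total variation norm.
   Context: $\mu^{*k}$ denotes the $k$-fold convolution power and $\delta_1$ the Dirac mass at the identity. *)

(* Defs.v *)
From HB Require Import structures.
From mathcomp Require Import all_boot all_order all_algebra.
From mathcomp Require Import all_classical all_reals all_analysis.
Set Implicit Arguments. Unset Strict Implicit. Unset Printing Implicit Defensive.
Import Order.TTheory GRing.Theory Num.Theory.
Local Open Scope classical_set_scope.
Local Open Scope ring_scope.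
Local Open Scope ereal_scope.

(* k-fold convolution power of a (set-function) measure m on a group G
   with multiplication [mul] and identity [one]:
     m^{*0} = delta_one,
     m^{*(k+1)}(A) = \int m(dx) m^{*k}(x^{-1} A)   ( = (m * m^{*k})(A) ). *)
Fixpoint convpow d (G : measurableType d) (R : realType)
    (mul : G -> G -> G) (one : G) (m : set G -> \bar R) (k : nat)
    : set G -> \bar R :=
  match k with
  | 0%N => fun A => \d_one A
  | k'.+1 => fun A =>
      \int[m]_x (convpow mul one m k' [set y | A (mul x y)])
  end.

Definition lazy_meas d (G : measurableType d) (R : realType) (one : G)
    (m : set G -> \bar R) : set G -> \bar R :=
  fun A => (2^-1)%:E * m A + (2^-1)%:E * \d_one A.

Definition tvnorm d (G : measurableType d) (R : realType)
    (nu : set G -> \bar R) : \bar R :=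
  ereal_sup [set s | exists (n : nat) (A : 'I_n -> set G),
    (forall i, measurable (A i)) /\
    (forall i j, i != j -> A i `&` A j = set0) /\
    s = \sum_(i < n) `| nu (A i) |].

(* Main.v *)
Require Import Defs.
From HB Require Import structures.
From mathcomp Require Import all_boot all_order all_algebra.
From mathcomp Require Import all_classical all_reals all_analysis.
From mathcomp Require Import ring lra zify measurable_realfun.
Import Order.TTheory GRing.Theory Num.Theory.
Local Open Scope classical_set_scope.
Local Open Scope ring_scope.

Section Comb.
Context {R : realType}.

Definition bb (k j : nat) : R := ('C(k, j))%:R / 2 ^+ k.

Lemma telesc n j :
  \sum_(i < j.+1) (2 * ('C(n, i))%:R - ('C(n.+1, i))%:R) = ('C(n, j))%:R :> R.
Proof.
elim: j => [|j IH]; first by rewrite big_ord1 !bin0; lra.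
rewrite big_ord_recr /= IH binS natrD; lra.
Qed.

Lemma hockey n j : \sum_(k < n) bb k j = 2 - 2 * \sum_(i < j.+1) bb n i.
Proof.
elim: n => [|n IH].
  rewrite big_ord0 big_ord_recl /bb bin0 expr0 big1 ?divr1 ?addr0; first lra.
  by move=> i _; rewrite bin0n /= mul0r.
rewrite big_ord_recr /= IH.
suff: 2 * \sum_(i < j.+1) bb n i - 2 * \sum_(i < j.+1) bb n.+1 i = bb n j by lra.
rewrite !mulr_sumr -sumrB /bb -telesc mulr_suml; apply: eq_bigr => i _.
have h : (2 : R) ^+ n != 0 by apply: expf_neq0; rewrite pnatr_eq0.
rewrite exprS; field; by rewrite h.
Qed.

Lemma sum_bin_big k m : (k < m)%N -> \sum_(j < m) ('C(k, j))%:R = 2 ^+ k :> R.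
Proof.
move=> km.
have := expnDn 1 1 k; rewrite addn1 => e.
have -> : (2 : R) ^+ k = (2 ^ k)%N%:R by rewrite natrX.
rewrite e natr_sum (big_ord_widen m (fun i => ('C(k, i) * (1 ^ (k - i) * 1 ^ i))%:R) km).
rewrite [RHS]big_mkcond /=; apply: eq_bigr => i _.
rewrite !exp1n !muln1; case: ifP => // /negbT; rewrite -leqNgt => h.
by rewrite bin_small.
Qed.

Lemma sum_indic (x : nat -> R) n m : (n <= m)%N ->
  \sum_(1 <= k < n) x k = \sum_(j < m) ((1 <= j)%N && (j < n)%N)%:R * x j.
Proof.
move=> nm; rewrite -(big_mkord xpredT (fun j => ((1 <= j)%N && (j < n)%N)%:R * x j)).
rewrite (@big_cat_nat _ _ _ n 0 m _ _ (leq0n n) nm) /= [X in _ = _ + X]big1_seq ?addr0; last first.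
  move=> i /andP[_]; rewrite mem_index_iota => /andP[h _]; by rewrite (leq_gtF h) andbF mul0r.
case: n nm => [|n] nm; first by rewrite !big_geq.
rewrite [X in _ = X]big_ltn // mul0r add0r.
apply: eq_big_nat => i /andP[h1 h2]; by rewrite h1 h2 mul1r.
Qed.

Lemma sum_tri (x : nat -> R) m :
  \sum_(k < m.+1) \sum_(i < k.+1) x i = \sum_(i < m.+1) (m.+1%:R - i%:R) * x i.
Proof.
elim: m => [|m IH]; first by rewrite !big_ord1 subr0 mul1r.
rewrite big_ord_recr /= IH [X in _ = X]big_ord_recr /=.
rewrite [X in _ = _ + X](_ : _ = x m.+1); last by rewrite -addn1 natrD; lra.
rewrite [X in _ + X = _]big_ord_recr /= addrA; congr (_ + _).
rewrite -big_split /=; apply: eq_bigr => i _; rewrite -[m.+2]addn1 natrD; lra.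
Qed.

Lemma down_id n m : (n.+1%:R - m%:R) * ('C(n.+1, m))%:R = n.+1%:R * ('C(n, m))%:R :> R.
Proof.
case: m => [|m]; first by rewrite !bin0 subr0.
have h1 := mul_bin_diag n.+1 m; rewrite /= in h1.
have h2 := binS n m.
have e1 : m.+1%:R * ('C(n.+1, m.+1))%:R = n.+1%:R * ('C(n, m))%:R :> R.
  by rewrite -!natrM h1.
rewrite mulrBl e1 h2 natrD mulrDr; lra.
Qed.

Lemma L3b n j : \sum_(i < j.+1)
   ((n.+1%:R - i%:R) * ('C(n.+1, i))%:R - i%:R * ('C(n.+1, i))%:R)
   = n.+1%:R * ('C(n, j))%:R :> R.
Proof.
elim: j => [|j IH]; first by rewrite big_ord1 !bin0 subr0 mul0r subr0.
rewrite big_ord_recr /= IH down_id.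
have h1 := mul_bin_diag n.+1 j; rewrite /= in h1.
have e1 : j.+1%:R * ('C(n.+1, j.+1))%:R = n.+1%:R * ('C(n, j))%:R :> R.
  by rewrite -!natrM h1.
rewrite e1; lra.
Qed.

Lemma L4 N : ('C(N.*2, N) ^ 2 * N.+1 <= 16 ^ N)%N.
Proof.
elim: N => [|N IH]; first by [].
set c := 'C(N.*2, N); set c' := 'C(N.+1.*2, N.+1).
have e1 : (N.+1 * c' = N.+1.*2 * 'C(N.*2.+1, N))%N.
  by rewrite /c' -mul_bin_diag doubleS.
have e2 : (N.*2.+1 * c = N.+1 * 'C(N.*2.+1, N))%N.
  have := mul_bin_down N.*2.+1 N; rewrite /c /= => ->.
  by rewrite -addnn -addSn addnK.
have e3 : (N.+1 * c' = 2 * (N.*2.+1 * c))%N.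
  have : (N.+1 * (N.+1 * c') = N.+1 * (2 * (N.*2.+1 * c)))%N.
    rewrite e1 e2 -!mul2n; nia.
  by move/eqP; rewrite eqn_pmul2l // => /eqP.
have key : ((N.+1 ^ 2) * (c' ^ 2 * N.+2) <= (N.+1 ^ 2) * 16 ^ N.+1)%N.
  have -> : ((N.+1 ^ 2) * (c' ^ 2 * N.+2) = 4 * (N.*2.+1)^2 * N.+2 * c ^ 2)%N.
    have -> : (N.+1 ^ 2 * (c' ^ 2 * N.+2) = (N.+1 * c') ^ 2 * N.+2)%N.
      by rewrite expnMn mulnA.
    rewrite e3 -!mul2n; nia.
  have h3 : (4 * (N.*2.+1)^2 * N.+2 <= 16 * N.+1 ^ 2 * N.+1)%N by rewrite -!mul2n; nia.
  apply: leq_trans (leq_mul h3 (leqnn (c ^ 2))) _.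
  rewrite [(16 ^ N.+1)%N]expnS.
  have -> : (16 * N.+1 ^ 2 * N.+1 * c ^ 2 = (16 * N.+1 ^ 2) * (c ^ 2 * N.+1))%N by nia.
  have -> : (N.+1 ^ 2 * (16 * 16 ^ N) = (16 * N.+1 ^ 2) * 16 ^ N)%N by nia.
  by rewrite leq_mul2l IH orbT.
by rewrite leq_pmul2l // in key; rewrite expn_gt0.
Qed.


Definition QQ (N j : nat) : R := \sum_(i < j.+1) bb (2 * N).+1 i.
Definition ww (N j : nat) : R :=
  ((2 * N)%:R)^-1 * \sum_(1 <= k < (2 * N).+1) bb k j.
Definition uu (N j : nat) : R := (N%:R)^-1 * ((1 <= j)%N && (j < N.+1)%N)%:R.
Definition aa N j := ww N j - uu N j.

Lemma bb_ge0 k j : 0 <= bb k j.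
Proof. by rewrite /bb divr_ge0 // exprn_ge0. Qed.

Lemma QQ_ge0 N j : 0 <= QQ N j.
Proof. by apply: sumr_ge0 => i _; exact: bb_ge0. Qed.

Lemma ww_ge0 N j : 0 <= ww N j.
Proof. by rewrite /ww mulr_ge0 // ?invr_ge0 // sumr_ge0 // => i _; exact: bb_ge0. Qed.

Lemma W1 N j : (1 <= j)%N ->
  \sum_(1 <= k < (2 * N).+1) bb k j = 2 - 2 * QQ N j.
Proof.
move=> j1; rewrite /QQ -hockey -(big_mkord (fun _ => true) (fun k => bb k j)) (@big_ltn _ _ _ 0) //.
by rewrite /bb bin0n; case: j j1 => // j _; rewrite mul0r add0r.
Qed.

Lemma W2 N : (0 < N)%N -> \sum_(j < (2 * N).+1) ww N j = 1.
Proof.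
move=> N0; rewrite /ww -mulr_sumr exchange_big /=.
rewrite (eq_big_nat _ _ (F2 := fun _ => 1)); last first.
  move=> k /andP[_ hk]; rewrite /bb -mulr_suml sum_bin_big // mulfV //.
  all: try by apply: expf_neq0; rewrite pnatr_eq0.
rewrite sumr_const_nat subn1 /= mulVf //.
by rewrite pnatr_eq0 muln_eq0 negb_or /= -lt0n N0.
Qed.

Lemma W3 N : (0 < N)%N -> \sum_(j < (2 * N).+1) uu N j = 1.
Proof.
move=> N0; rewrite /uu -mulr_sumr.
have := sum_indic (fun _ => 1) N.+1 (2 * N).+1.
rewrite ltnS leq_pmull // => /(_ isT).
under [X in _ = X -> _]eq_bigr do rewrite mulr1.
move=> <-; rewrite sumr_const_nat /= subn1 /= mulVf //.
by rewrite pnatr_eq0 -lt0n.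
Qed.

Lemma W4 N j : (0 < N)%N -> `|aa N j| =
  aa N j + 2 * (((1 <= j)%N && (j < N.+1)%N)%:R * (QQ N j / N%:R)).
Proof.
move=> N0; have Np : (0 : R) < N%:R by rewrite ltr0n.
rewrite /aa /uu; case: (boolP ((1 <= j)%N && (j < N.+1)%N)) => /= [/andP[j1 _]|_].
  rewrite /ww W1 //.
  have e : ((2 * N)%:R)^-1 * (2 - 2 * QQ N j) - N%:R^-1 * 1 = - (QQ N j / N%:R).
    rewrite natrM; field; by rewrite gt_eqF.
  rewrite e normrN ger0_norm; last by rewrite divr_ge0 ?QQ_ge0 // ltW.
  lra.
by rewrite mulr0 mul0r mulr0 subr0 addr0 ger0_norm // ww_ge0.
Qed.

Lemma W5 N : (0 < N)%N -> \sum_(j < (2 * N).+1) `|aa N j| <=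
   2 / N%:R * \sum_(k < N.+1) QQ N k.
Proof.
move=> N0; have Np : (0 : R) < N%:R by rewrite ltr0n.
under eq_bigr do rewrite W4 //.
rewrite big_split /= /aa sumrB W2 // W3 // subrr add0r.
rewrite -mulr_sumr.
have := sum_indic (fun k => QQ N k / N%:R) N.+1 (2 * N).+1.
rewrite ltnS leq_pmull // => /(_ isT) <-.
rewrite -mulr_suml mulrA mulrAC ler_pM2l ?divr_gt0 //.
rewrite -(big_mkord (fun _ => true) (fun k => QQ N k)) (@big_ltn _ _ _ 0) //.
by rewrite lerDr QQ_ge0.
Qed.


Lemma sum_bin_le n m : \sum_(i < m) ('C(n, i))%:R <= 2 ^+ n :> R.
Proof.
case: (leqP m n) => h; last by rewrite sum_bin_big.
rewrite -(@sum_bin_big n n.+1) //.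
rewrite (big_ord_widen n.+1 (fun i => ('C(n, i))%:R : R)) ?(leq_trans h) //.
rewrite [X in _ <= X](bigID (fun i : 'I_n.+1 => (i < m)%N)) /= lerDl.
by apply: sumr_ge0 => i _; rewrite ler0n.
Qed.

Lemma W6 N : \sum_(k < N.+1) QQ N k <=
  (((2 * N).+1)%:R * ('C(2 * N, N))%:R) / 2 ^+ (2 * N).+2 + 1 / 2.
Proof.
set M := (2 * N).+1.
have eM : M%:R = 2 * N%:R + 1 :> R by rewrite /M -addn1 natrD natrM.
have eN : N.+1%:R = N%:R + 1 :> R by rewrite -addn1 natrD.
have p2 : (2 : R) ^+ M != 0 by apply: expf_neq0; rewrite pnatr_eq0.
have e : \sum_(k < N.+1) QQ N k =
   (1/2 * \sum_(i < N.+1) ((M%:R - i%:R) * ('C(M, i))%:R - i%:R * ('C(M, i))%:R)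
    + 1/2 * \sum_(i < N.+1) ('C(M, i))%:R) / 2 ^+ M.
  rewrite /QQ sum_tri.
  have -> : (1/2 * \sum_(i < N.+1) ((M%:R - i%:R) * ('C(M, i))%:R - i%:R * ('C(M, i))%:R)
    + 1/2 * \sum_(i < N.+1) ('C(M, i))%:R) / 2 ^+ M =
    \sum_(i < N.+1) ((1/2 * ((M%:R - i%:R) * ('C(M, i))%:R - i%:R * ('C(M, i))%:R)
    + 1/2 * ('C(M, i))%:R) / 2 ^+ M) :> R.
    by rewrite -mulr_suml [X in _ = X / _]big_split /= -!mulr_sumr.
  apply: eq_bigr => i _; rewrite /bb eM eN -/M; field; by rewrite p2.
rewrite e /M L3b -/M.
have h2 := sum_bin_le M N.+1.
have -> : (2 : R) ^+ (2 * N).+2 = 2 * 2 ^+ M by rewrite exprS.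
rewrite ler_pdivrMr ?exprn_gt0 //.
have -> : (M%:R * ('C(2 * N, N))%:R / (2 * 2 ^+ M) + 1 / 2) * 2 ^+ M =
   1/2 * (M%:R * ('C(2 * N, N))%:R) + 1/2 * 2 ^+ M :> R.
  field; by rewrite p2.
lra.
Qed.


Lemma W7 N : (0 < N)%N ->
  \sum_(j < (2 * N).+1) `|aa N j| <= 5 / (2 * Num.sqrt (N%:R : R)).
Proof.
move=> N0.
apply: le_trans (W5 N N0) _.
have Np : (0 : R) < N%:R by rewrite ltr0n.
set s := Num.sqrt (N%:R : R).
have s2 : s ^+ 2 = N%:R by rewrite sqr_sqrtr // ltW.
have s0 : 0 < s by rewrite sqrtr_gt0.
have N1 : (1 : R) <= N%:R by rewrite ler1n.
have s1 : 1 <= s by nra.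
set c : R := ('C(2 * N, N))%:R.
set y : R := 4 ^+ N.
have y0 : 0 < y by rewrite exprn_gt0.
have c0 : 0 <= c by rewrite ler0n.
have hL4 : c ^+ 2 * (N%:R + 1) <= y ^+ 2.
  have h := L4 N; rewrite -mul2n in h.
  have h' : c ^+ 2 * (N.+1)%:R <= (16%:R) ^+ N :> R.
    by rewrite /c -!natrX -natrM ler_nat.
  have -> : N%:R + 1 = (N.+1)%:R :> R by rewrite -addn1 natrD.
  have -> : y ^+ 2 = 16%:R ^+ N by rewrite /y exprAC expr2 -natrM.
  exact: h'.
set A := c / y.
have A0 : 0 <= A by rewrite divr_ge0 // ltW.
have hA : A ^+ 2 * (N%:R + 1) <= 1.
  rewrite /A expr_div_n mulrAC ler_pdivrMr ?exprn_gt0 // mul1r //.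
have As : A * s <= 1.
  have h1 : (A * s) ^+ 2 <= 1.
    rewrite exprMn s2; have := sqr_ge0 A; nra.
  have : 0 <= A * s by rewrite mulr_ge0 // ltW.
  nra.
have A1 : A <= 1 by nra.
have e2 : (2 : R) ^+ (2 * N).+2 = 4 * y.
  have e4 : (2 : R) ^+ 2 = 4 by rewrite expr2 -natrM.
  by rewrite exprS exprS exprM e4 /y; lra.
have := W6 N; rewrite e2 -/c => hW.
apply: le_trans (ler_wpM2l _ hW) _; first by rewrite divr_ge0.
have eM : ((2 * N).+1)%:R = 2 * s ^+ 2 + 1 :> R by rewrite s2 -addn1 natrD natrM.
rewrite eM -s2.
have -> : 2 / s ^+ 2 * ((2 * s ^+ 2 + 1) * c / (4 * y) + 1 / 2) =
   ((2 * s ^+ 2 + 1) * A + 2) / (2 * s ^+ 2).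
  rewrite /A; field; by rewrite gt_eqF // gt_eqF.
rewrite ler_pdivrMr; last by rewrite mulr_gt0 // exprn_gt0.
have -> : 5 / (2 * s) * (2 * s ^+ 2) = 5 * s.
  field; by rewrite gt_eqF.
nra.
Qed.


Lemma tv_real n m (a : nat -> R) (x : 'I_n -> nat -> R) :
  (forall i j, 0 <= x i j) -> (forall j, \sum_(i < n) x i j <= 1) ->
  \sum_(i < n) `|\sum_(j < m) a j * x i j| <= \sum_(j < m) `|a j|.
Proof.
move=> x0 x1.
apply: (@le_trans _ _ (\sum_(i < n) \sum_(j < m) `|a j| * x i j)).
  apply: ler_sum => i _; apply: le_trans (ler_norm_sum _ _ _) _.
  by apply: ler_sum => j _; rewrite normrM (ger0_norm (x0 i j)).
rewrite exchange_big /=; apply: ler_sum => j _.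
rewrite -mulr_sumr; rewrite -[leRHS]mulr1 ler_wpM2l //.
Qed.


Lemma pascal_sum k (x : nat -> R) :
  \sum_(j < k.+2) bb k.+1 j * x j =
  2^-1 * \sum_(j < k.+1) bb k j * x j.+1 + 2^-1 * \sum_(j < k.+1) bb k j * x j.
Proof.
have p2 : (2 : R) ^+ k != 0 by apply: expf_neq0; rewrite pnatr_eq0.
rewrite big_ord_recl [X in _ = _ + _ * X]big_ord_recl /=.
rewrite [X in _ = _ + _ * (_ + X)](_ : _ =
   \sum_(j < k.+1) bb k j.+1 * x j.+1); last first.
  by rewrite [RHS]big_ord_recr /= /bb bin_small // mul0r mul0r addr0.
have -> : \sum_(i < k.+1) bb k.+1 (bump 0 i) * x (bump 0 i) =
   2^-1 * \sum_(j < k.+1) bb k j * x j.+1 + 2^-1 * \sum_(j < k.+1) bb k j.+1 * x j.+1.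
  rewrite !mulr_sumr -big_split /=; apply: eq_bigr => i _.
  rewrite /bump /= /bb binS natrD exprS; field; by rewrite p2.
rewrite /bb !bin0 exprS; field; by rewrite p2.
Qed.

Lemma widen_bb k m (x : nat -> R) : (k < m)%N ->
  \sum_(j < k.+1) bb k j * x j = \sum_(j < m) bb k j * x j.
Proof.
move=> km; rewrite (big_ord_widen m (fun j => bb k j * x j) km) [LHS]big_mkcond /=.
apply: eq_bigr => i _; case: ifP => // /negbT; rewrite -leqNgt => h.
by rewrite /bb bin_small // mul0r mul0r.
Qed.

Lemma coef_id N (x : nat -> R) : (0 < N)%N ->
  ((2 * N)%:R)^-1 * \sum_(1 <= k < (2 * N).+1) \sum_(j < k.+1) bb k j * x j
  - (N%:R)^-1 * \sum_(1 <= k < N.+1) x k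
  = \sum_(j < (2 * N).+1) aa N j * x j.
Proof.
move=> N0.
rewrite (eq_big_nat _ _ (F2 := fun k => \sum_(j < (2 * N).+1) bb k j * x j)); last first.
  by move=> k /andP[_ hk]; rewrite (@widen_bb k (2 * N).+1).
rewrite exchange_big /= (sum_indic x N.+1 (2 * N).+1); last by rewrite ltnS leq_pmull.
rewrite mulr_sumr mulr_sumr -sumrB; apply: eq_bigr => j _.
rewrite /aa /ww /uu -mulr_suml; ring.
Qed.

End Comb.

Section Meas.
Context (R : realType) (d : measure_display) (G : measurableType d)
  (mul : G -> G -> G) (one : G)
  (assoc : forall x y z, mul x (mul y z) = mul (mul x y) z)
  (mul1 : forall x, mul one x = x) (mulr1' : forall x, mul x one = x)
  (mulm : measurable_fun setT (fun p : G * G => mul p.1 p.2))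
  (mu : probability G R).

Local Notation P := (convpow mul one (mu : set G -> \bar R)).

Lemma sec_meas A x : measurable A -> measurable [set y | A (mul x y)].
Proof.
move=> mA.
have mx := measurable_fun_pair2 x mulm.
have := mx measurableT A mA; by rewrite setTI.
Qed.

Lemma disj_sum_le1 n (B : 'I_n -> set G) (a : G) :
  (forall i j, i != j -> B i `&` B j = set0) ->
  \sum_(i < n) ((a \in B i)%:R : R) <= 1.
Proof.
move=> dB.
case: (pselect (exists i, a \in B i)) => [[i0 h0]|hn].
  rewrite (bigD1 i0) //= h0 big1 ?addr0 // => i hi.
  case: (boolP (a \in B i)) => // hai.
  have : (B i `&` B i0) a by split; rewrite -in_setE.
  by rewrite dB // => -[].
rewrite big1 // => i _; case: (boolP (a \in B i)) => // hai.
by exfalso; apply: hn; exists i.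
Qed.

Lemma Pprop (k : nat) :
  (forall A : set G, measurable A -> measurable_fun setT (fun x => P k [set y | A (mul x y)]))
  /\ (forall A : set G, 0 <= P k A)%E
  /\ (forall n (B : 'I_n -> set G), (forall i, measurable (B i)) ->
       (forall i j, i != j -> B i `&` B j = set0) ->
       (\sum_(i < n) P k (B i) <= 1)%E).
Proof.
elim: k => [|k [IH1 [IH2 IH3]]].
  split; [|split].
  - move=> A mA.
    have -> : (fun x => P 0 [set y | A (mul x y)]) = (fun x => \d_x A : \bar R).
      apply/funext => x /=; rewrite !diracE; congr ((_)%:R%:E).
      by rewrite /in_mem /= /mem /= /in_set /= mulr1'.
    exact: measurable_fun_dirac.
  - by move=> A /=; rewrite diracE lee_fin ler0n.
  - move=> n B mB dB /=.
    under eq_bigr do rewrite diracE.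
    by rewrite sumEFin lee_fin disj_sum_le1.
split; [|split].
- move=> A mA.
  have -> : (fun x => P k.+1 [set y | A (mul x y)]) =
     fubini_F mu (fun p => P k [set y | A (mul (mul p.1 p.2) y)]).
    apply/funext => x /=; rewrite /fubini_F; apply: eq_integral => z _ /=.
    congr (P k _); apply/funext => y /=; by rewrite assoc.
  apply: measurable_fun_fubini_tonelli_F.
    exact: (measurableT_comp (IH1 A mA) mulm).
  by move=> p; exact: IH2.
- by move=> A /=; apply: integral_ge0 => x _; exact: IH2.
- move=> n B mB dB /=.
  rewrite -ge0_integral_sum //; last first.
    by move=> i; exact: IH1.
  apply: (@le_trans _ _ (\int[mu]_x (cst 1 x))%E).
    apply: ge0_le_integral => //.
    + by move=> x _; apply: sume_ge0 => i _; exact: IH2.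
    + by apply: emeasurable_sum => i; exact: IH1.
    + move=> x _; apply: IH3 => [i|i j ij]; first exact: sec_meas.
      apply/seteqP; split => // y [h1 h2].
      by have := dB i j ij; rewrite -subset0 => /(_ (mul x y)); apply.
  rewrite integral_cst // mul1e; have h := probability_setT mu; by rewrite -h.
Qed.


Lemma Pge0 k A : (0 <= P k A)%E.
Proof. by have [_ [h _]] := Pprop k; exact: h. Qed.

Lemma Pmeas k A : measurable A ->
  measurable_fun setT (fun x => P k [set y | A (mul x y)]).
Proof. by have [h _] := Pprop k; exact: h. Qed.

Lemma Psum k n (B : 'I_n -> set G) : (forall i, measurable (B i)) ->
  (forall i j, i != j -> B i `&` B j = set0) ->
  (\sum_(i < n) P k (B i) <= 1)%E.
Proof. by have [_ [_ h]] := Pprop k; exact: h. Qed.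

Lemma Pfin k A : measurable A -> P k A \is a fin_num.
Proof.
move=> mA; rewrite ge0_fin_numE ?Pge0 //.
have := @Psum k 1 (fun _ => A) (fun _ => mA).
rewrite big_ord1 => /(_ _) h.
apply: le_lt_trans (h _) _; last exact: ltey.
by move=> i j; rewrite !ord1 eqxx.
Qed.

Definition pp k A : R := fine (P k A).

Lemma PE k A : measurable A -> P k A = (pp k A)%:E.
Proof. by move=> mA; rewrite /pp fineK // Pfin. Qed.

Lemma pp_ge0 k A : 0 <= pp k A.
Proof. exact: fine_ge0 (Pge0 k A). Qed.

Lemma pp_sum k n (B : 'I_n -> set G) : (forall i, measurable (B i)) ->
  (forall i j, i != j -> B i `&` B j = set0) ->
  \sum_(i < n) pp k (B i) <= 1.
Proof.
move=> mB dB; rewrite -lee_fin -sumEFin.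
under eq_bigr do rewrite -PE //.
exact: Psum.
Qed.

Lemma lazy_int (f : G -> \bar R) : measurable_fun setT f -> (forall x, 0 <= f x)%E ->
  (\int[lazy_meas one mu]_x f x =
   (2^-1)%:E * \int[mu]_x f x + (2^-1)%:E * f one)%E.
Proof.
move=> mf f0.
have h20 : (0 : R) <= 2^-1 by rewrite invr_ge0.
pose h := NngNum h20.
have HL : lazy_meas one mu =
    measure_add (mscale h mu) (mscale h (\d_one : measure G R)).
  apply/funext => A; rewrite /lazy_meas /measure_add /msum /=.
  by rewrite big_ord_recr big_ord1 /= /mscale.
rewrite HL ge0_integral_measure_add // ?ge0_integral_mscale //.
by rewrite integral_dirac // diracE in_setT mul1e.
Qed.


Lemma expand k A : measurable A ->
  convpow mul one (lazy_meas one mu) k A = (\sum_(j < k.+1) bb k j * pp j A)%:E.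
Proof.
elim: k A => [|k IH] A mA.
  by rewrite big_ord1 /bb bin0 expr0 divr1 mul1r -PE.
rewrite [LHS]/=.
transitivity (\int[lazy_meas one mu]_x
    (\sum_(j < k.+1) (bb k j)%:E * P j [set y | A (mul x y)]))%E.
  congr (integral _ _ _); apply/funext => x; rewrite IH; last exact: sec_meas.
  have ms := @sec_meas A x mA.
  transitivity (\sum_(j < k.+1) (bb k j * pp j [set y | A (mul x y)])%:E)%E.
    by rewrite sumEFin.
  by apply: eq_bigr => j _; rewrite EFinM -PE.
rewrite lazy_int; last 2 first.
- apply: emeasurable_sum => j; apply: measurable_funeM; exact: Pmeas.
- move=> x; apply: sume_ge0 => j _; apply: mule_ge0; last exact: Pge0.
  by rewrite lee_fin bb_ge0.
rewrite ge0_integral_sum //; last 2 first.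
- move=> j; apply: measurable_funeM; exact: Pmeas.
- move=> j x _; apply: mule_ge0; last exact: Pge0.
  by rewrite lee_fin bb_ge0.
have e1 : forall j, (\int[mu]_x ((bb k j)%:E * P j [set y | A (mul x y)]) =
    ((bb k j * pp j.+1 A)%:E))%E.
  move=> j; rewrite ge0_integralZl //; last 3 first.
  - exact: Pmeas.
  - by move=> x _; exact: Pge0.
  - by rewrite lee_fin bb_ge0.
  have := @PE j.+1 A mA; rewrite [convpow _ _ _ j.+1 _]/= => ->; by rewrite EFinM.
under eq_bigr do rewrite e1.
have eone : [set y | A (mul one y)] = A by apply/funext => y; rewrite /= mul1.
rewrite eone.
under [X in (_ + _ * X)%E]eq_bigr => j _ do rewrite (@PE j A mA) -EFinM.
by rewrite !sumEFin -!EFinM -EFinD (pascal_sum k (fun j => pp j A)).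
Qed.


Lemma tv_bound (N : nat) : (1 < N)%N ->
    (tvnorm (fun A =>
      ((2 * N)%:R^-1)%:E *
        (\sum_(1 <= k < (2 * N).+1) convpow mul one (lazy_meas one mu) k A)
      - (N%:R^-1)%:E * (\sum_(1 <= k < N.+1) convpow mul one mu k A))
    <= (5 * ln N%:R / Num.sqrt N%:R)%:E)%E.
Proof.
move=> N1; have N0 : (0 < N)%N by apply: ltn_trans N1.
rewrite /tvnorm; apply: ge_ereal_sup => _ [n [A [mA [dA ->]]]].
have enu : forall B, measurable B ->
  (((2 * N)%:R^-1)%:E *
        (\sum_(1 <= k < (2 * N).+1) convpow mul one (lazy_meas one mu) k B)
      - (N%:R^-1)%:E * (\sum_(1 <= k < N.+1) convpow mul one mu k B))%E =
  (\sum_(j < (2 * N).+1) aa N j * pp j B)%:E.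
  move=> B mB; rewrite -(coef_id N (fun j => pp j B) N0).
  under eq_bigr do rewrite expand //.
  under [X in (_ - _ * X)%E]eq_bigr do rewrite PE //.
  by rewrite !sumEFin -!EFinM -EFinB.
under eq_bigr do rewrite enu // abse_EFin.
rewrite sumEFin lee_fin.
apply: le_trans (@tv_real R n (2 * N).+1 (aa N) (fun i j => pp j (A i)) _ _) _.
- by move=> i j; exact: pp_ge0.
- by move=> j; exact: pp_sum.
apply: le_trans (W7 N N0) _.
set s := Num.sqrt (N%:R : R).
have s0 : 0 < s by rewrite sqrtr_gt0 ltr0n.
have hl : 1/2 <= ln (N%:R : R).
  have e1 : expR (1/2 : R) <= 2.
    have h := expR_ge1Dx (- (1/2) : R); rewrite expRN in h.
    have ep : 0 < expR (1/2 : R) := expR_gt0 _.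
    have h2 : (1 + - (1/2)) * expR (1/2 : R) <= (expR (1/2 : R))^-1 * expR (1/2 : R).
      by rewrite ler_wpM2r // ltW.
    rewrite mulVf ?gt_eqF // in h2; lra.
  rewrite -[X in X <= _](expRK (1/2 : R)) ler_ln ?posrE ?expR_gt0 ?ltr0n //.
  apply: le_trans e1 _; by rewrite ler_nat.
rewrite ler_pdivlMr // mulrAC.
have -> : 5 * s / (2 * s) = 5 / 2 by field; rewrite gt_eqF.
lra.
Qed.

End Meas.

Theorem lemma5p2 (R : realType) :
  exists C : R, 0 < C /\
  forall (d : measure_display) (G : measurableType d)
    (mul : G -> G -> G) (one : G) (inv : G -> G),
    (forall x y z, mul x (mul y z) = mul (mul x y) z) ->
    (forall x, mul one x = x) -> (forall x, mul x one = x) ->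
    (forall x, mul (inv x) x = one) -> (forall x, mul x (inv x) = one) ->
    measurable_fun setT (fun p : G * G => mul p.1 p.2) ->
    forall (mu : probability G R) (N : nat), (1 < N)%N ->
    (tvnorm (fun A =>
      ((2 * N)%:R^-1)%:E *
        (\sum_(1 <= k < (2 * N).+1) convpow mul one (lazy_meas one mu) k A)
      - (N%:R^-1)%:E * (\sum_(1 <= k < N.+1) convpow mul one mu k A))
    <= (C * ln N%:R / Num.sqrt N%:R)%:E)%E.
Proof.
exists 5; split; first by [].
move=> d G mul one inv assoc mul1 mulr1 _ _ mulm mu N N1.
exact: (@tv_bound R d G mul one assoc mul1 mulr1 mulm mu N N1).
Qed.
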